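(* Let $n\ge3$, $r>0$ and let $F$ be the chord length distribution function of $\mathcal P_{n,r}$. Then $$F(s)=\Big[\Big(1-\frac{\pi}{n}\cot\frac{\pi}{n}\Big)\csc\frac{\pi}{n}+\frac{\pi}{n}\sec\frac{\pi}{n}\Big]\frac{s}{4r}$$ for $0\le s\le 2r\cos^2\frac{\pi}{2n}$ if $n=3$, and for $0\le s\le 2r\sin\frac{\pi}{n}$ if $n\ge4$.
   Context: $\mathcal P_{n,r}$ denotes the regular polygon with $n$ sides whose circumscribed circle has radius $r$ and centre at the origin, with perimeter $u=2nr\sin(\pi/n)$. Lines are $g(p,\phi)=\{x\cos\phi+y\sin\phi=p\}$, $p\ge0$, $0\le\phi<2\pi$, with the motion-invariant measure $\mu$ given by $dp\,d\phi$. For a line $g$ meeting the polygon, $|\chi(g)|$ is the length of the chord $g\cap\mathcal P_{n,r}$. The chord length distribution function is $F(s)=\frac1u\,\mu(\{g: g\cap\mathcal P_{n,r}\ne\emptyset,\ |\chi(g)|\le s\})$. *)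

(* Defs.v *)
From Stdlib Require Import Reals Lra ClassicalDescription.
Open Scope R_scope.

(* Regular n-gon P_{n,r}: circumscribed radius r, centre origin, vertices at
   r (cos(2 pi k/n), sin(2 pi k/n)), k = 0..n-1.  As a convex polygon it is the
   intersection of the n half-planes bounded by its sides: the side between
   vertices k and k+1 has outer unit normal at angle (2k+1) pi / n and lies at
   distance r cos(pi/n) (the apothem) from the origin. *)
Definition in_polygon (n : nat) (r : R) (x y : R) : Prop :=
  forall k : nat, (k < n)%nat ->
    x * cos ((2 * INR k + 1) * PI / INR n) + y * sin ((2 * INR k + 1) * PI / INR n)
      <= r * cos (PI / INR n).

Definition on_line (p phi x y : R) : Prop := x * cos phi + y * sin phi = p.

Definition meets (n : nat) (r p phi : R) : Prop :=
  exists x y, in_polygon n r x y /\ on_line p phi x y.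

(* |chi(g)| <= s : the chord g \cap P_{n,r} (a segment) has length at most s,
   i.e. any two of its points are at Euclidean distance at most s. *)
Definition chord_le (n : nat) (r p phi s : R) : Prop :=
  forall x1 y1 x2 y2,
    in_polygon n r x1 y1 -> on_line p phi x1 y1 ->
    in_polygon n r x2 y2 -> on_line p phi x2 y2 ->
    sqrt ((x1 - x2) ^ 2 + (y1 - y2) ^ 2) <= s.

Definition ind (P : Prop) : R := if excluded_middle_informative P then 1 else 0.

Definition is_RInt (f : R -> R) (a b v : R) : Prop :=
  exists pr : Riemann_integrable f a b, RiemannInt pr = v.

Definition perimeter (n : nat) (r : R) : R := 2 * INR n * r * sin (PI / INR n).

(* mu({g : g meets P, |chi(g)| <= s}) = m, with dmu = dp dphi,
   p in [0, infty), phi in [0, 2 pi).  Lines with p > r miss the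
   circumscribed disc, hence the polygon, so p ranges over [0, r]. *)
Definition line_measure (n : nat) (r s m : R) : Prop :=
  exists I : R -> R,
    (forall phi, is_RInt (fun p => ind (meets n r p phi /\ chord_le n r p phi s)) 0 r (I phi))
    /\ is_RInt I 0 (2 * PI) m.

Definition chord_cdf_is (n : nat) (r s v : R) : Prop :=
  exists m, line_measure n r s m /\ v = m / perimeter n r.

Definition cot (x : R) : R := cos x / sin x.
Definition csc (x : R) : R := 1 / sin x.
Definition sec (x : R) : R := 1 / cos x.

(* Main.v *)
Require Import Defs.
From Stdlib Require Import Reals Lra ClassicalDescription Classical List ZArith Lia FunctionalExtensionality.
From Coquelicot Require Import Coquelicot.
Open Scope R_scope.


Lemma RChasles (f:R->R) a b c l1 l2 : is_RInt f a b l1 -> is_RInt f b c l2 -> is_RInt f a c (l1 + l2).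
Proof. intros H1 H2. exact (is_RInt_Chasles f a b c l1 l2 H1 H2). Qed.
Lemma Rplus_int (f g:R->R) a b l1 l2 : is_RInt f a b l1 -> is_RInt g a b l2 -> is_RInt (fun x => f x + g x) a b (l1 + l2).
Proof. intros H1 H2. exact (is_RInt_plus f g a b l1 l2 H1 H2). Qed.
Lemma Rminus_int (f g:R->R) a b l1 l2 : is_RInt f a b l1 -> is_RInt g a b l2 -> is_RInt (fun x => f x - g x) a b (l1 - l2).
Proof. intros H1 H2. exact (is_RInt_minus f g a b l1 l2 H1 H2). Qed.

Lemma toDefs (f : R -> R) a b : ex_RInt f a b -> Defs.is_RInt f a b (RInt f a b).
Proof. intros H. exists (ex_RInt_Reals_0 _ _ _ H). rewrite <- RInt_Reals. reflexivity. Qed.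

Lemma is_RInt_cst_open (f : R -> R) a b v : a <= b ->
  (forall x, a < x < b -> f x = v) -> is_RInt f a b ((b - a) * v).
Proof.
  intros hab H. apply is_RInt_ext with (fun _ => v).
  - intros x [h1 h2]. rewrite Rmin_left in h1 by lra. rewrite Rmax_right in h2 by lra.
    symmetry; apply H; lra.
  - apply (is_RInt_const a b v).
Qed.

Lemma is_RInt_ext_pt (f g : R -> R) a b v c : a <= b ->
  (forall x, a <= x <= b -> x <> c -> f x = g x) -> is_RInt g a b v -> is_RInt f a b v.
Proof.
  intros hab H Hg.
  destruct (Rlt_or_le c a) as [hc|hc]; [| destruct (Rlt_or_le b c) as [hc'|hc']].
  - apply is_RInt_ext with g; auto. intros x [h1 h2].
    rewrite Rmin_left in h1 by lra. rewrite Rmax_right in h2 by lra. symmetry; apply H; lra.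
  - apply is_RInt_ext with g; auto. intros x [h1 h2].
    rewrite Rmin_left in h1 by lra. rewrite Rmax_right in h2 by lra. symmetry; apply H; lra.
  - assert (Ex : ex_RInt g a b) by (exists v; exact Hg).
    assert (E1 : ex_RInt g a c) by (apply (ex_RInt_Chasles_1 g a c b); [lra | exact Ex]).
    assert (E2 : ex_RInt g c b) by (apply (ex_RInt_Chasles_2 g a c b); [lra | exact Ex]).
    assert (HH : is_RInt f a b (plus (RInt g a c) (RInt g c b))).
    { apply (is_RInt_Chasles f a c b).
      - apply is_RInt_ext with g. intros x [h1 h2].
        rewrite Rmin_left in h1 by lra. rewrite Rmax_right in h2 by lra. symmetry; apply H; lra.
        exact (RInt_correct _ _ _ E1).
      - apply is_RInt_ext with g. intros x [h1 h2].
        rewrite Rmin_left in h1 by lra. rewrite Rmax_right in h2 by lra. symmetry; apply H; lra.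
        exact (RInt_correct _ _ _ E2). }
    replace v with (plus (RInt g a c) (RInt g c b)); auto.
    rewrite RInt_Chasles; auto. apply is_RInt_unique; auto.
Qed.

Lemma is_RInt_ext_fin (l : list R) : forall (f g : R -> R) a b v, a <= b ->
  (forall x, a <= x <= b -> ~ In x l -> f x = g x) -> is_RInt g a b v -> is_RInt f a b v.
Proof.
  induction l as [|c l IH]; intros f g a b v hab H Hg.
  - apply is_RInt_ext_pt with g (a - 1); [exact hab| |exact Hg]. intros x hx _. apply H; auto.
  - set (g' := fun x => if Req_EM_T x c then f x else g x).
    apply IH with g'; auto.
    + intros x hx hn. unfold g'. destruct (Req_EM_T x c); auto.
      apply H; auto. intros [h|h]; auto.
    + apply is_RInt_ext_pt with g c; auto. intros x _ hx. unfold g'.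
      destruct (Req_EM_T x c); tauto.
Qed.

Ltac mm := unfold Rmin, Rmax in *;
  repeat match goal with
  | H : context [Rle_dec ?a ?b] |- _ => destruct (Rle_dec a b)
  | |- context [Rle_dec ?a ?b] => destruct (Rle_dec a b)
  end; lra.

Definition clamp a b x := Rmin b (Rmax a x).

Lemma ind_true (Q : Prop) : Q -> Defs.ind Q = 1.
Proof. intros h; unfold Defs.ind; destruct (excluded_middle_informative Q); tauto. Qed.
Lemma ind_false (Q : Prop) : ~ Q -> Defs.ind Q = 0.
Proof. intros h; unfold Defs.ind; destruct (excluded_middle_informative Q); tauto. Qed.

Lemma is_RInt_ind_interval a b c d : a <= b -> c <= d ->
  is_RInt (fun p => Defs.ind (c <= p <= d)) a b (clamp a b d - clamp a b c).
Proof.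
  intros hab hcd. unfold clamp.
  set (c' := Rmin b (Rmax a c)). set (d' := Rmin b (Rmax a d)).
  assert (h1 : a <= c' <= b) by (unfold c'; mm).
  assert (h2 : c' <= d' <= b) by (unfold c', d'; mm).
  replace (d' - c') with ((((c' - a) * 0) + ((d' - c') * 1)) + ((b - d') * 0)) by ring.
  apply RChasles with d'. apply RChasles with c'.
  - apply is_RInt_cst_open. lra. intros x hx. apply ind_false. intro hh.
    unfold c' in hx. mm.
  - apply is_RInt_cst_open. lra. intros x hx. apply ind_true.
    unfold c', d' in hx. mm.
  - apply is_RInt_cst_open. lra. intros x hx. apply ind_false. intro hh.
    unfold d' in hx. mm.
Qed.

Definition convexP (C : R -> Prop) := forall x y z, C x -> C y -> x <= z <= y -> C z.

Lemma ex_RInt_ind_convex (C : R -> Prop) a b : a <= b -> convexP C ->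
  ex_RInt (fun p => Defs.ind (C p)) a b.
Proof.
  intros hab HC.
  destruct (classic (exists x, a <= x <= b /\ C x)) as [[x0 [hx0 hC0]]|hno].
  - set (E := fun x => a <= x <= b /\ C x).
    assert (bE : bound E) by (exists b; intros x [hx _]; lra).
    destruct (completeness E bE (ex_intro _ x0 (conj hx0 hC0))) as [d [hd1 hd2]].
    set (E' := fun x => E (- x)).
    assert (bE' : bound E') by (exists (-a); intros x [hx _]; lra).
    assert (nE' : exists x, E' x) by (exists (-x0); unfold E'; rewrite Ropp_involutive; split; auto).
    destruct (completeness E' bE' nE') as [mc [hc1 hc2]].
    set (c := - mc).
    assert (Hc : forall x, E x -> c <= x).
    { intros x hx. unfold c. assert (mc >= -x). { apply Rle_ge, hc1. unfold E'. rewrite Ropp_involutive; auto. } lra. }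
    assert (Hd : forall x, E x -> x <= d) by (intros x hx; apply hd1; auto).
    assert (cd : c <= d) by (specialize (Hc x0 (conj hx0 hC0)); specialize (Hd x0 (conj hx0 hC0)); lra).
    assert (ac : a <= c). { unfold c. assert (mc <= -a). apply hc2. intros x [hx _]; lra. lra. }
    assert (db : d <= b). { apply hd2. intros x [hx _]; lra. }
    exists (clamp a b d - clamp a b c).
    apply is_RInt_ext_fin with (c :: d :: nil) (fun p => Defs.ind (c <= p <= d)); auto;
      [| apply is_RInt_ind_interval; lra].
    intros x hx hin.
    assert (xc : x <> c) by (intro; apply hin; left; auto).
    assert (xd : x <> d) by (intro; apply hin; right; left; auto).
    destruct (Rlt_or_le x c) as [h|h].
    + cbv beta. rewrite (ind_false (c <= x <= d)) by (intro; lra). rewrite ind_false; auto. intro hC.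
      specialize (Hc x (conj hx hC)); lra.
    + destruct (Rlt_or_le d x) as [h'|h'].
      * cbv beta. rewrite (ind_false (c <= x <= d)) by (intro; lra). rewrite ind_false; auto. intro hC.
        specialize (Hd x (conj hx hC)); lra.
      * cbv beta. rewrite (ind_true (c <= x <= d)) by lra. rewrite ind_true; auto.
        assert (Ey : exists y, E y /\ y < x).
        { apply NNPP; intro hn. assert (mc <= - x).
          { apply hc2. intros z hz. unfold E' in hz.
            destruct (Rlt_or_le (-z) x) as [hz'|hz']. exfalso; apply hn; exists (-z); auto. lra. }
          unfold c in *; lra. }
        assert (Ez : exists y, E y /\ x < y).
        { apply NNPP; intro hn. assert (d <= x).
          { apply hd2. intros z hz.
            destruct (Rlt_or_le x z) as [hz'|hz']. exfalso; apply hn; exists z; auto. lra. }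
          lra. }
        destruct Ey as [y [[_ hy] hyx]]. destruct Ez as [z [[_ hz] hxz]].
        apply (HC y z x); auto; lra.
  - exists ((b - a) * 0). apply is_RInt_cst_open; auto. intros x hx.
    apply ind_false. intro hC. apply hno. exists x. split; auto; lra.
Qed.

Definition om (n : nat) := PI / INR n.

Lemma om_facts n : (3 <= n)%nat -> 0 < om n /\ om n <= PI / 3 /\ INR n * om n = PI.
Proof.
  intros hn. assert (h3 : 3 <= INR n) by (replace 3 with (INR 3) by (simpl; ring); apply le_INR; auto).
  pose proof PI_RGT_0. unfold om. split; [|split].
  - apply Rdiv_lt_0_compat; lra.
  - unfold Rdiv. apply Rmult_le_compat_l; [lra|]. apply Rinv_le_contravar; lra.
  - field. lra.
Qed.

Lemma cos_perN x (m : nat) : cos (x + 2 * INR m * PI) = cos x.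
Proof. apply cos_period. Qed.
Lemma sin_perN x (m : nat) : sin (x + 2 * INR m * PI) = sin x.
Proof. apply sin_period. Qed.

Lemma cos_perZ x (q : Z) : cos (x + 2 * IZR q * PI) = cos x.
Proof.
  destruct (Z_le_gt_dec 0 q) as [h|h].
  - replace (IZR q) with (INR (Z.to_nat q)). apply cos_perN.
    rewrite INR_IZR_INZ, Z2Nat.id; auto.
  - set (y := x + 2 * IZR q * PI).
    rewrite <- (cos_perN y (Z.to_nat (- q))). f_equal.
    unfold y. rewrite INR_IZR_INZ, Z2Nat.id by lia. rewrite opp_IZR. ring.
Qed.
Lemma sin_perZ x (q : Z) : sin (x + 2 * IZR q * PI) = sin x.
Proof.
  destruct (Z_le_gt_dec 0 q) as [h|h].
  - replace (IZR q) with (INR (Z.to_nat q)). apply sin_perN.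
    rewrite INR_IZR_INZ, Z2Nat.id; auto.
  - set (y := x + 2 * IZR q * PI).
    rewrite <- (sin_perN y (Z.to_nat (- q))). f_equal.
    unfold y. rewrite INR_IZR_INZ, Z2Nat.id by lia. rewrite opp_IZR. ring.
Qed.

Lemma Zred (n : nat) (j : Z) : (0 < n)%nat -> exists q k, j = (q * Z.of_nat n + k)%Z /\ (0 <= k < Z.of_nat n)%Z.
Proof.
  intros hn. exists (j / Z.of_nat n)%Z, (j mod Z.of_nat n)%Z. split.
  - rewrite Z.mul_comm. apply Z.div_mod. lia.
  - apply Z.mod_pos_bound. lia.
Qed.

Lemma cos_le_w w x : 0 < w <= PI -> w <= x <= 2 * PI - w -> cos x <= cos w.
Proof.
  intros hw hx. destruct (Rle_or_lt x PI) as [h|h].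
  - destruct (Req_dec x w) as [e|e]. subst; lra.
    left. apply cos_decreasing_1; lra.
  - replace (cos x) with (cos (2 * PI - x)).
    + destruct (Req_dec (2*PI - x) w) as [e|e]. rewrite e; lra.
      left. apply cos_decreasing_1; lra.
    + rewrite cos_minus, cos_2PI, sin_2PI. ring.
Qed.

Lemma cos_ge_w w b : 0 < w <= PI -> - w <= b <= w -> cos w <= cos b.
Proof.
  intros hw hb. destruct (Rle_or_lt 0 b) as [h|h].
  - destruct (Req_dec b w) as [e|e]. subst; lra.
    left. apply cos_decreasing_1; lra.
  - rewrite <- (cos_neg b). destruct (Req_dec (-b) w) as [e|e]. rewrite e; lra.
    left. apply cos_decreasing_1; lra.
Qed.

Lemma cos_odd_le n (m : Z) : (3 <= n)%nat ->
  cos ((2 * IZR m + 1) * om n) <= cos (om n).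
Proof.
  intros hn. destruct (om_facts n hn) as [h0 [h1 h2]].
  destruct (Zred n m) as [q [k [e hk]]]; [lia|].
  replace ((2 * IZR m + 1) * om n) with ((2 * IZR k + 1) * om n + 2 * IZR q * PI).
  - rewrite cos_perZ. apply cos_le_w. pose proof PI_RGT_0; lra.
    assert (0 <= IZR k) by (apply IZR_le; lia).
    assert (IZR k <= INR n - 1).
    { rewrite INR_IZR_INZ. replace 1 with (IZR 1) by reflexivity. rewrite <- minus_IZR. apply IZR_le; lia. }
    split; nra.
  - rewrite e, plus_IZR, mult_IZR, <- INR_IZR_INZ. rewrite <- h2. ring.
Qed.

Lemma cos_even_le n (m : Z) b : (3 <= n)%nat -> - om n <= b <= om n ->
  cos (b + 2 * IZR m * om n) <= cos b.
Proof.
  intros hn hb. destruct (om_facts n hn) as [h0 [h1 h2]]. pose proof PI_RGT_0.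
  destruct (Zred n m) as [q [k [e hk]]]; [lia|].
  replace (b + 2 * IZR m * om n) with ((b + 2 * IZR k * om n) + 2 * IZR q * PI).
  - rewrite cos_perZ. destruct (Z.eq_dec k 0) as [ek|ek].
    + subst k. replace (b + 2 * IZR 0 * om n) with b by (simpl; ring). lra.
    + apply Rle_trans with (cos (om n)); [|apply cos_ge_w; lra].
      apply cos_le_w. lra.
      assert (1 <= IZR k) by (apply IZR_le; lia).
      assert (IZR k <= INR n - 1).
      { rewrite INR_IZR_INZ. replace 1 with (IZR 1) by reflexivity. rewrite <- minus_IZR. apply IZR_le; lia. }
      split; nra.
  - rewrite e, plus_IZR, mult_IZR, <- INR_IZR_INZ. rewrite <- h2. ring.
Qed.

Lemma cos_even_eq n (q : Z) b : (3 <= n)%nat -> cos (b + 2 * (IZR q * INR n) * om n) = cos b.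
Proof.
  intros hn. destruct (om_facts n hn) as [h0 [h1 h2]].
  replace (b + 2 * (IZR q * INR n) * om n) with (b + 2 * IZR q * PI) by (rewrite <- h2; ring).
  apply cos_perZ.
Qed.

Lemma poly_Z n r x y (j : Z) : (3 <= n)%nat -> in_polygon n r x y ->
  x * cos ((2 * IZR j + 1) * om n) + y * sin ((2 * IZR j + 1) * om n) <= r * cos (om n).
Proof.
  intros hn H. destruct (om_facts n hn) as [h0 [h1 h2]].
  destruct (Zred n j) as [q [k [e hk]]]; [lia|].
  replace ((2 * IZR j + 1) * om n) with ((2 * IZR k + 1) * om n + 2 * IZR q * PI).
  - rewrite cos_perZ, sin_perZ.
    specialize (H (Z.to_nat k)). replace (INR (Z.to_nat k)) with (IZR k) in H.
    + unfold om. replace ((2 * IZR k + 1) * (PI / INR n)) with ((2 * IZR k + 1) * PI / INR n) by (unfold Rdiv; ring).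
      apply H. lia.
    + rewrite INR_IZR_INZ, Z2Nat.id; auto; lia.
  - rewrite e, plus_IZR, mult_IZR, <- INR_IZR_INZ. rewrite <- h2. ring.
Qed.

Definition vx n r (k : Z) := r * cos (2 * IZR k * om n).
Definition vy n r (k : Z) := r * sin (2 * IZR k * om n).

Lemma dot_cos r A B : r * cos A * cos B + r * sin A * sin B = r * cos (A - B).
Proof. rewrite cos_minus. ring. Qed.

Lemma vert_in n r k : (3 <= n)%nat -> 0 < r -> in_polygon n r (vx n r k) (vy n r k).
Proof.
  intros hn hr j hj. unfold vx, vy.
  rewrite dot_cos. apply Rmult_le_compat_l; [lra|].
  rewrite <- cos_neg.
  replace (- (2 * IZR k * om n - (2 * INR j + 1) * PI / INR n))
    with ((2 * IZR (Z.of_nat j - k) + 1) * om n).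
  - apply cos_odd_le; auto.
  - rewrite minus_IZR, <- INR_IZR_INZ. unfold om. unfold Rdiv. ring.
Qed.

Lemma poly_conv n r x1 y1 x2 y2 l : in_polygon n r x1 y1 -> in_polygon n r x2 y2 ->
  0 <= l <= 1 -> in_polygon n r (l * x1 + (1 - l) * x2) (l * y1 + (1 - l) * y2).
Proof.
  intros H1 H2 hl k hk. specialize (H1 k hk). specialize (H2 k hk).
  set (c := cos _) in *. set (s := sin _) in *.
  replace ((l * x1 + (1 - l) * x2) * c + (l * y1 + (1 - l) * y2) * s)
    with (l * (x1 * c + y1 * s) + (1 - l) * (x2 * c + y2 * s)) by ring.
  replace (r * cos (PI / INR n)) with (l * (r * cos (PI / INR n)) + (1 - l) * (r * cos (PI / INR n))) by ring.
  apply Rplus_le_compat; apply Rmult_le_compat_l; lra.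
Qed.

Definition tco phi x y := - x * sin phi + y * cos phi.

Lemma line_param p phi x y : on_line p phi x y ->
  x = p * cos phi - tco phi x y * sin phi /\ y = p * sin phi + tco phi x y * cos phi.
Proof.
  unfold on_line, tco. intros H. pose proof (sin2_cos2 phi). unfold Rsqr in *.
  rewrite <- H. split.
  - transitivity (x * (sin phi * sin phi + cos phi * cos phi)); [rewrite H0; ring | ring].
  - transitivity (y * (sin phi * sin phi + cos phi * cos phi)); [rewrite H0; ring | ring].
Qed.

Lemma cons_pt p phi x y psi : on_line p phi x y ->
  x * cos psi + y * sin psi = p * cos (psi - phi) + tco phi x y * sin (psi - phi).
Proof.
  intros H. destruct (line_param _ _ _ _ H) as [hx hy].
  rewrite cos_minus, sin_minus. set (t := tco phi x y) in *. rewrite hx, hy. ring.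
Qed.

Lemma dist_line p phi x1 y1 x2 y2 : on_line p phi x1 y1 -> on_line p phi x2 y2 ->
  (x1 - x2) ^ 2 + (y1 - y2) ^ 2 = (tco phi x1 y1 - tco phi x2 y2) ^ 2.
Proof.
  intros H1 H2. destruct (line_param _ _ _ _ H1) as [hx1 hy1].
  destruct (line_param _ _ _ _ H2) as [hx2 hy2].
  pose proof (sin2_cos2 phi). unfold Rsqr in *.
  set (t1 := tco phi x1 y1) in *. set (t2 := tco phi x2 y2) in *.
  rewrite hx1, hy1, hx2, hy2.
  transitivity ((t1 - t2)^2 * (sin phi * sin phi + cos phi * cos phi)); [ring | rewrite H; ring].
Qed.

Lemma sqrt_sq_abs x : sqrt (x ^ 2) = Rabs x.
Proof. rewrite <- sqrt_Rsqr_abs. f_equal. unfold Rsqr. ring. Qed.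

Lemma line_flip p phi x y : on_line p phi x y <-> on_line (- p) (phi + PI) x y.
Proof. unfold on_line. rewrite neg_cos, neg_sin. split; intros; lra. Qed.

Lemma tco_flip phi x y : tco (phi + PI) x y = - tco phi x y.
Proof. unfold tco. rewrite neg_cos, neg_sin. ring. Qed.

Lemma line_unflip p phi x y : on_line (- p) (phi + PI) x y -> on_line p phi x y.
Proof. unfold on_line. rewrite neg_cos, neg_sin. intros; lra. Qed.

Lemma meets_flip n r p phi : meets n r p phi <-> meets n r (- p) (phi + PI).
Proof.
  unfold meets. split; intros [x [y [h1 h2]]]; exists x, y; split; auto.
  apply (proj1 (line_flip p phi x y)); auto. apply line_unflip; auto.
Qed.

Lemma chord_flip n r p phi s : chord_le n r p phi s <-> chord_le n r (- p) (phi + PI) s.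
Proof.
  unfold chord_le. split; intros H x1 y1 x2 y2 a b c d; apply H; auto.
  - apply line_unflip; auto.
  - apply line_unflip; auto.
  - apply (proj1 (line_flip _ _ _ _)); auto.
  - apply (proj1 (line_flip _ _ _ _)); auto.
Qed.

Definition Wit n r p phi s := exists x1 y1 x2 y2, in_polygon n r x1 y1 /\ on_line p phi x1 y1 /\
  in_polygon n r x2 y2 /\ on_line p phi x2 y2 /\ tco phi x2 y2 - tco phi x1 y1 > s.

Lemma Wit_not n r p phi s : Wit n r p phi s -> ~ chord_le n r p phi s.
Proof.
  intros [x1 [y1 [x2 [y2 [a [b [c [d e]]]]]]]] H.
  specialize (H x2 y2 x1 y1 c d a b). rewrite (dist_line p phi) in H by auto.
  rewrite sqrt_sq_abs in H. pose proof (Rle_abs (tco phi x2 y2 - tco phi x1 y1)). lra.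
Qed.

Lemma not_Wit n r p phi s : ~ chord_le n r p phi s -> Wit n r p phi s.
Proof.
  intros H. unfold chord_le in H.
  apply not_all_ex_not in H as [x1 H]. apply not_all_ex_not in H as [y1 H].
  apply not_all_ex_not in H as [x2 H]. apply not_all_ex_not in H as [y2 H].
  apply imply_to_and in H as [a H]. apply imply_to_and in H as [b H].
  apply imply_to_and in H as [c H]. apply imply_to_and in H as [d H].
  apply Rnot_le_lt in H. rewrite (dist_line p phi) in H by auto. rewrite sqrt_sq_abs in H.
  destruct (Rle_or_lt 0 (tco phi x1 y1 - tco phi x2 y2)) as [h|h].
  - rewrite Rabs_right in H by lra. exists x2, y2, x1, y1. repeat split; auto; lra.
  - rewrite Rabs_left in H by lra. exists x1, y1, x2, y2. repeat split; auto; lra.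
Qed.

Lemma Wit_flip n r p phi s : Wit n r (- p) (phi + PI) s -> Wit n r p phi s.
Proof.
  intros [x1 [y1 [x2 [y2 [a [b [c [d e]]]]]]]].
  rewrite !tco_flip in e.
  exists x2, y2, x1, y1. repeat split; auto; try (apply line_unflip; auto); lra.
Qed.

Lemma on_line_comb p1 p2 phi x1 y1 x2 y2 l : on_line p1 phi x1 y1 -> on_line p2 phi x2 y2 ->
  on_line (l * p1 + (1 - l) * p2) phi (l * x1 + (1 - l) * x2) (l * y1 + (1 - l) * y2).
Proof. unfold on_line. intros h1 h2. rewrite <- h1, <- h2. ring. Qed.

Lemma tco_comb phi x1 y1 x2 y2 l :
  tco phi (l * x1 + (1 - l) * x2) (l * y1 + (1 - l) * y2) = l * tco phi x1 y1 + (1 - l) * tco phi x2 y2.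
Proof. unfold tco. ring. Qed.

Lemma comb_between p0 p1 p : p0 <= p <= p1 -> exists l, 0 <= l <= 1 /\ p = l * p0 + (1 - l) * p1.
Proof.
  intros h. destruct (Req_dec p0 p1) as [e|e].
  - exists 1. split. lra. subst. lra.
  - exists ((p1 - p) / (p1 - p0)). split.
    + split. apply Rdiv_le_0_compat; lra.
      apply Rmult_le_reg_r with (p1 - p0). lra. unfold Rdiv. rewrite Rmult_assoc, Rinv_l by lra. lra.
    + field. lra.
Qed.

Lemma Wit_conv n r phi s : convexP (fun p => Wit n r p phi s).
Proof.
  intros p0 p1 p [x1 [y1 [x2 [y2 [a [b [c [d e]]]]]]]] [x3 [y3 [x4 [y4 [a' [b' [c' [d' e']]]]]]]] hp.
  destruct (comb_between _ _ _ hp) as [l [hl ->]].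
  exists (l * x1 + (1 - l) * x3), (l * y1 + (1 - l) * y3), (l * x2 + (1 - l) * x4), (l * y2 + (1 - l) * y4).
  repeat split; try apply poly_conv; try apply on_line_comb; auto.
  rewrite !tco_comb.
  set (A := tco phi x2 y2 - tco phi x1 y1) in *. set (B := tco phi x4 y4 - tco phi x3 y3) in *.
  apply Rlt_gt. apply Rlt_le_trans with (l * A + (1 - l) * B); [|unfold A, B; lra].
  destruct (Rlt_or_le 0 l) as [h|h].
  - assert (l * (A - s) > 0) by (apply Rmult_gt_0_compat; lra).
    assert ((1 - l) * (B - s) >= 0) by (apply Rle_ge, Rmult_le_pos; lra). nra.
  - assert (l = 0) by lra. subst l. lra.
Qed.

Lemma meets_conv n r phi : convexP (fun p => meets n r p phi).
Proof.
  intros p0 p1 p [x1 [y1 [a b]]] [x2 [y2 [a' b']]] hp.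
  destruct (comb_between _ _ _ hp) as [l [hl ->]].
  exists (l * x1 + (1 - l) * x2), (l * y1 + (1 - l) * y2). split.
  apply poly_conv; auto. apply on_line_comb; auto.
Qed.

Lemma sin_pos_2w n : (3 <= n)%nat -> 0 < sin (2 * om n) /\ 0 < sin (om n) /\ 0 < cos (om n).
Proof.
  intros hn. destruct (om_facts n hn) as [h0 [h1 h2]]. pose proof PI_RGT_0.
  split; [|split]. apply sin_gt_0; lra. apply sin_gt_0; lra. apply cos_gt_0; lra.
Qed.

Lemma g_pos n b : (3 <= n)%nat -> - om n < b < om n ->
  0 < sin (om n - b) /\ 0 < sin (om n + b).
Proof.
  intros hn hb. destruct (om_facts n hn) as [h0 [h1 h2]]. pose proof PI_RGT_0.
  split; apply sin_gt_0; lra.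
Qed.

Lemma id1 w b : sin (w - b) * cos (w + b) + cos (w - b) * sin (w + b) = sin (2 * w).
Proof. rewrite <- sin_plus. f_equal; ring. Qed.

Lemma id2 r w b : r * cos w * (sin (w - b) + sin (w + b)) = r * cos b * sin (2 * w).
Proof. rewrite sin_minus, sin_plus, sin_2a. ring. Qed.

Lemma corner_cons n r k b phi p x y : (3 <= n)%nat -> phi = 2 * IZR k * om n + b ->
  in_polygon n r x y -> on_line p phi x y ->
  p * cos (om n - b) + tco phi x y * sin (om n - b) <= r * cos (om n) /\
  p * cos (om n + b) - tco phi x y * sin (om n + b) <= r * cos (om n).
Proof.
  intros hn hphi HP HL. split.
  - pose proof (poly_Z n r x y k hn HP) as H. rewrite (cons_pt p phi) in H by auto.
    replace ((2 * IZR k + 1) * om n - phi) with (om n - b) in H by (rewrite hphi; ring). exact H.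
  - pose proof (poly_Z n r x y (k - 1) hn HP) as H. rewrite (cons_pt p phi) in H by auto.
    replace ((2 * IZR (k - 1) + 1) * om n - phi) with (- (om n + b)) in H
      by (rewrite hphi, minus_IZR; simpl; ring).
    rewrite cos_neg, sin_neg in H. lra.
Qed.

Lemma corner_upper n r k b phi p x y : (3 <= n)%nat -> 0 < r -> - om n < b < om n ->
  phi = 2 * IZR k * om n + b ->
  in_polygon n r x y -> on_line p phi x y -> p <= r * cos b.
Proof.
  intros hn hr hb hphi HP HL.
  destruct (corner_cons n r k b phi p x y hn hphi HP HL) as [c1 c2].
  destruct (g_pos n b hn hb) as [s1 s2]. destruct (sin_pos_2w n hn) as [s0 _].
  pose proof (id1 (om n) b). pose proof (id2 r (om n) b).
  set (t := tco phi x y) in *.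
  assert (A : p * sin (2 * om n) <= r * cos b * sin (2 * om n)).
  { rewrite <- H0, <- H.
    apply Rmult_le_compat_l with (r := sin (om n + b)) in c1; [|lra].
    apply Rmult_le_compat_l with (r := sin (om n - b)) in c2; [|lra].
    nra. }
  apply Rmult_le_reg_r with (sin (2 * om n)); auto.
Qed.

Definition Kc n s b := s * sin (om n - b) * sin (om n + b) / sin (2 * om n).

Lemma corner_chord n r k b phi p s : (3 <= n)%nat -> 0 < r -> - om n < b < om n ->
  phi = 2 * IZR k * om n + b -> 0 <= s ->
  r * cos b - Kc n s b <= p -> chord_le n r p phi s.
Proof.
  intros hn hr hb hphi hs hp x1 y1 x2 y2 P1 L1 P2 L2.
  rewrite (dist_line p phi) by auto. rewrite sqrt_sq_abs.
  destruct (corner_cons n r k b phi p x1 y1 hn hphi P1 L1) as [c1 c2].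
  destruct (corner_cons n r k b phi p x2 y2 hn hphi P2 L2) as [d1 d2].
  destruct (g_pos n b hn hb) as [s1 s2]. destruct (sin_pos_2w n hn) as [s0 _].
  pose proof (id1 (om n) b). pose proof (id2 r (om n) b).
  set (t1 := tco phi x1 y1) in *. set (t2 := tco phi x2 y2) in *.
  set (S1 := sin (om n - b)) in *. set (S2 := sin (om n + b)) in *.
  set (C1 := cos (om n - b)) in *. set (C2 := cos (om n + b)) in *.
  set (S0 := sin (2 * om n)) in *.
  assert (hK : Kc n s b * S0 = s * S1 * S2) by (unfold Kc; fold S1 S2 S0; field; lra).
  assert (B : (r * cos b - p) * S0 <= s * S1 * S2).
  { rewrite <- hK. apply Rmult_le_compat_r; lra. }
  assert (E : forall u v, u * S1 <= r * cos (om n) - p * C1 -> - v * S2 <= r * cos (om n) - p * C2 ->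
            u - v <= s).
  { intros u v hu hv.
    assert (hh : (u - v) * (S1 * S2) <= s * (S1 * S2)).
    { apply Rmult_le_compat_l with (r := S2) in hu; [|lra].
      apply Rmult_le_compat_l with (r := S1) in hv; [|lra]. nra. }
    apply Rmult_le_reg_r with (S1 * S2). apply Rmult_lt_0_compat; lra. exact hh. }
  apply Rabs_le. split.
  - assert (t2 - t1 <= s) by (apply E; lra). lra.
  - apply E; lra.
Qed.

Lemma vdot n r k A : vx n r k * cos A + vy n r k * sin A = r * cos (2 * IZR k * om n - A).
Proof. unfold vx, vy. apply dot_cos. Qed.

Lemma id3 w b : cos b - cos (2 * w - b) = 2 * sin w * sin (w - b).
Proof.
  rewrite cos_minus, sin_minus, cos_2a, sin_2a. pose proof (sin2_cos2 w). unfold Rsqr in *.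
  replace (cos b) with (cos b * (sin w * sin w + cos w * cos w)) at 1 by (rewrite H; ring). ring.
Qed.

Lemma id4 w b : cos b - cos (2 * w + b) = 2 * sin w * sin (w + b).
Proof.
  rewrite cos_plus, sin_plus, cos_2a, sin_2a. pose proof (sin2_cos2 w). unfold Rsqr in *.
  replace (cos b) with (cos b * (sin w * sin w + cos w * cos w)) at 1 by (rewrite H; ring). ring.
Qed.

Lemma seg_pt n r k1 k2 phi p : (3 <= n)%nat -> 0 < r ->
  let h1 := r * cos (2 * IZR k1 * om n - phi) in let h2 := r * cos (2 * IZR k2 * om n - phi) in
  h2 < h1 -> h2 <= p <= h1 ->
  exists x y, in_polygon n r x y /\ on_line p phi x y /\
    forall A, x * cos A + y * sin A = ((p - h2) / (h1 - h2)) * (r * cos (2 * IZR k1 * om n - A))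
       + (1 - (p - h2) / (h1 - h2)) * (r * cos (2 * IZR k2 * om n - A)).
Proof.
  intros hn hr h1 h2 hh hp. set (l := (p - h2) / (h1 - h2)).
  assert (hl : 0 <= l <= 1).
  { unfold l. split. apply Rdiv_le_0_compat; lra.
    apply Rmult_le_reg_r with (h1 - h2). lra. unfold Rdiv. rewrite Rmult_assoc, Rinv_l by lra. lra. }
  exists (l * vx n r k1 + (1 - l) * vx n r k2), (l * vy n r k1 + (1 - l) * vy n r k2).
  assert (HA : forall A, (l * vx n r k1 + (1 - l) * vx n r k2) * cos A +
     (l * vy n r k1 + (1 - l) * vy n r k2) * sin A =
     l * (r * cos (2 * IZR k1 * om n - A)) + (1 - l) * (r * cos (2 * IZR k2 * om n - A))).
  { intros A. rewrite <- !vdot. ring. }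
  split; [|split].
  - apply poly_conv; auto; apply vert_in; auto.
  - unfold on_line. rewrite HA. fold h1 h2. unfold l. field. lra.
  - exact HA.
Qed.

Lemma Kc_nonneg n s b : (3 <= n)%nat -> - om n < b < om n -> 0 <= s -> 0 <= Kc n s b.
Proof.
  intros hn hb hs. destruct (g_pos n b hn hb). destruct (sin_pos_2w n hn) as [h0 _].
  unfold Kc. apply Rdiv_le_0_compat; auto. apply Rmult_le_pos; [apply Rmult_le_pos|]; lra.
Qed.

Lemma corner_wit n r k b phi p s : (3 <= n)%nat -> 0 < r -> - om n < b < om n ->
  phi = 2 * IZR k * om n + b -> 0 <= s ->
  r * cos (2 * om n - b) <= p -> r * cos (2 * om n + b) <= p -> p < r * cos b - Kc n s b ->
  Wit n r p phi s.
Proof.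
  intros hn hr hb hphi hs hp1 hp2 hp3.
  pose proof (Kc_nonneg n s b hn hb hs) as hK.
  destruct (g_pos n b hn hb) as [s1 s2]. destruct (sin_pos_2w n hn) as [s0 [sw cw]].
  pose proof (id3 (om n) b) as i3. pose proof (id4 (om n) b) as i4.
  destruct (seg_pt n r k (k + 1) phi p hn hr) as [x2 [y2 [P2 [L2 A2]]]].
  { replace (2 * IZR k * om n - phi) with (- b) by (rewrite hphi; ring). rewrite cos_neg.
    replace (2 * IZR (k + 1) * om n - phi) with (2 * om n - b) by (rewrite hphi, plus_IZR; ring).
    apply Rmult_lt_compat_l; auto. assert (0 < sin (om n) * sin (om n - b)) by (apply Rmult_lt_0_compat; lra). lra. }
  { replace (2 * IZR k * om n - phi) with (- b) by (rewrite hphi; ring). rewrite cos_neg.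
    replace (2 * IZR (k + 1) * om n - phi) with (2 * om n - b) by (rewrite hphi, plus_IZR; ring). lra. }
  destruct (seg_pt n r k (k - 1) phi p hn hr) as [x1 [y1 [P1 [L1 A1]]]].
  { replace (2 * IZR k * om n - phi) with (- b) by (rewrite hphi; ring). rewrite cos_neg.
    replace (2 * IZR (k - 1) * om n - phi) with (- (2 * om n + b)) by (rewrite hphi, minus_IZR; simpl; ring). rewrite (cos_neg (2 * om n + b)).
    apply Rmult_lt_compat_l; auto. assert (0 < sin (om n) * sin (om n + b)) by (apply Rmult_lt_0_compat; lra). lra. }
  { replace (2 * IZR k * om n - phi) with (- b) by (rewrite hphi; ring). rewrite cos_neg.
    replace (2 * IZR (k - 1) * om n - phi) with (- (2 * om n + b)) by (rewrite hphi, minus_IZR; simpl; ring). rewrite (cos_neg (2 * om n + b)). lra. }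
  specialize (A2 ((2 * IZR k + 1) * om n)). rewrite (cons_pt p phi) in A2 by auto.
  replace (2 * IZR k * om n - (2 * IZR k + 1) * om n) with (- om n) in A2 by ring.
  replace (2 * IZR (k + 1) * om n - (2 * IZR k + 1) * om n) with (om n) in A2 by (rewrite plus_IZR; ring).
  replace ((2 * IZR k + 1) * om n - phi) with (om n - b) in A2 by (rewrite hphi; ring).
  rewrite cos_neg in A2.
  specialize (A1 ((2 * IZR k - 1) * om n)). rewrite (cons_pt p phi) in A1 by auto.
  replace (2 * IZR k * om n - (2 * IZR k - 1) * om n) with (om n) in A1 by ring.
  replace (2 * IZR (k - 1) * om n - (2 * IZR k - 1) * om n) with (- om n) in A1 by (rewrite minus_IZR; simpl; ring).
  replace ((2 * IZR k - 1) * om n - phi) with (- (om n + b)) in A1 by (rewrite hphi; ring).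
  rewrite cos_neg, sin_neg, cos_neg in A1.
  set (l2 := (p - _) / _) in A2. set (l1 := (p - _) / _) in A1.
  assert (E2 : p * cos (om n - b) + tco phi x2 y2 * sin (om n - b) = r * cos (om n)) by (rewrite A2; ring).
  assert (E1 : p * cos (om n + b) - tco phi x1 y1 * sin (om n + b) = r * cos (om n)) by (transitivity (p * cos (om n + b) + tco phi x1 y1 * - sin (om n + b)); [ring | rewrite A1; ring]).
  exists x1, y1, x2, y2. repeat split; auto.
  pose proof (id1 (om n) b). pose proof (id2 r (om n) b).
  set (t1 := tco phi x1 y1) in *. set (t2 := tco phi x2 y2) in *.
  set (S1 := sin (om n - b)) in *. set (S2 := sin (om n + b)) in *.
  set (C1 := cos (om n - b)) in *. set (C2 := cos (om n + b)) in *.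
  set (S0 := sin (2 * om n)) in *.
  assert (hKe : Kc n s b * S0 = s * S1 * S2) by (unfold Kc; fold S1 S2 S0; field; lra).
  assert (B : s * S1 * S2 < (r * cos b - p) * S0).
  { rewrite <- hKe. apply Rmult_lt_compat_r; lra. }
  assert (hh : s * (S1 * S2) < (t2 - t1) * (S1 * S2)).
  { assert ((t2 - t1) * (S1 * S2) = (r * cos b - p) * S0).
    { transitivity (S2 * (t2 * S1) - S1 * (t1 * S2)). ring.
      replace (t2 * S1) with (r * cos (om n) - p * C1) by lra.
      replace (t1 * S2) with (p * C2 - r * cos (om n)) by lra.
      replace ((r * cos b - p) * S0) with (r * cos b * S0 - p * S0) by ring.
      rewrite <- H0, <- H. ring. }
    lra. }
  apply Rlt_gt. apply Rmult_lt_reg_r with (S1 * S2). apply Rmult_lt_0_compat; lra. exact hh.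
Qed.

Lemma corner_meets n r k b phi p : (3 <= n)%nat -> 0 < r -> - om n < b < om n ->
  phi = 2 * IZR k * om n + b -> r * cos (2 * om n - b) <= p <= r * cos b -> meets n r p phi.
Proof.
  intros hn hr hb hphi hp.
  destruct (g_pos n b hn hb) as [s1 s2]. destruct (sin_pos_2w n hn) as [s0 [sw cw]].
  pose proof (id3 (om n) b) as i3.
  destruct (seg_pt n r k (k + 1) phi p hn hr) as [x2 [y2 [P2 [L2 A2]]]].
  { replace (2 * IZR k * om n - phi) with (- b) by (rewrite hphi; ring). rewrite cos_neg.
    replace (2 * IZR (k + 1) * om n - phi) with (2 * om n - b) by (rewrite hphi, plus_IZR; ring).
    apply Rmult_lt_compat_l; auto. assert (0 < sin (om n) * sin (om n - b)) by (apply Rmult_lt_0_compat; lra). lra. }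
  { replace (2 * IZR k * om n - phi) with (- b) by (rewrite hphi; ring). rewrite cos_neg.
    replace (2 * IZR (k + 1) * om n - phi) with (2 * om n - b) by (rewrite hphi, plus_IZR; ring). lra. }
  exists x2, y2; auto.
Qed.

Definition good n r s b := r * cos (2 * om n - b) < r * cos b - Kc n s b /\
                           r * cos (2 * om n + b) < r * cos b - Kc n s b.

Lemma meets_upper n r k b phi p : (3 <= n)%nat -> 0 < r -> - om n < b < om n ->
  phi = 2 * IZR k * om n + b -> meets n r p phi -> p <= r * cos b.
Proof. intros hn hr hb hphi [x [y [h1 h2]]]. eapply corner_upper; eauto. Qed.

Lemma Wit_meets n r p phi s : Wit n r p phi s -> meets n r p phi.
Proof. intros [x1 [y1 [x2 [y2 [a [b _]]]]]]. exists x1, y1; auto. Qed.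


Lemma charac n r s k b k' b' phi : (3 <= n)%nat -> 0 < r -> 0 <= s ->
  - om n < b < om n -> phi = 2 * IZR k * om n + b ->
  - om n < b' < om n -> phi + PI = 2 * IZR k' * om n + b' ->
  good n r s b -> good n r s b' ->
  (forall p, meets n r p phi /\ chord_le n r p phi s <->
    (r * cos b - Kc n s b <= p <= r * cos b) \/ (- (r * cos b') <= p <= - (r * cos b') + Kc n s b')) /\
  - (r * cos b') + Kc n s b' < r * cos b - Kc n s b.
Proof.
  intros hn hr hs hb hphi hb' hphi' [g1 g2] [g1' g2'].
  pose proof (Kc_nonneg n s b hn hb hs). pose proof (Kc_nonneg n s b' hn hb' hs).
  assert (BACK : forall p, (r * cos b - Kc n s b <= p <= r * cos b) \/
       (- (r * cos b') <= p <= - (r * cos b') + Kc n s b') -> meets n r p phi /\ chord_le n r p phi s).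
  { intros p [hp|hp].
    - split. apply (corner_meets n r k b); auto; lra.
      apply (corner_chord n r k b phi p s); auto; lra.
    - split.
      + apply (proj2 (meets_flip n r p phi)). apply (corner_meets n r k' b'); auto; lra.
      + apply (proj2 (chord_flip n r p phi s)). apply (corner_chord n r k' b' (phi + PI) (-p) s); auto; lra. }
  set (m1 := Rmax (r * cos (2 * om n - b)) (r * cos (2 * om n + b))).
  set (m1' := Rmax (r * cos (2 * om n - b')) (r * cos (2 * om n + b'))).
  assert (hm1 : r * cos (2 * om n - b) <= m1 /\ r * cos (2 * om n + b) <= m1 /\ m1 < r * cos b - Kc n s b)
    by (unfold m1; mm).
  assert (hm1' : r * cos (2 * om n - b') <= m1' /\ r * cos (2 * om n + b') <= m1' /\ m1' < r * cos b' - Kc n s b')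
    by (unfold m1'; mm).
  assert (W1 : forall p, m1 <= p < r * cos b - Kc n s b -> Wit n r p phi s).
  { intros p hp. apply (corner_wit n r k b phi p s); auto; lra. }
  assert (W2 : forall p, m1' <= - p < r * cos b' - Kc n s b' -> Wit n r p phi s).
  { intros p hp. apply Wit_flip. apply (corner_wit n r k' b' (phi + PI) (- p) s); auto; lra. }
  assert (DIS : - (r * cos b') + Kc n s b' < r * cos b - Kc n s b).
  { apply Rnot_le_lt. intro hc.
    set (p := (m1 + (r * cos b - Kc n s b)) / 2).
    assert (Wp : Wit n r p phi s) by (apply W1; unfold p; lra).
    assert (hp' : - p <= r * cos b').
    { apply (meets_upper n r k' b' (phi + PI)); auto. apply (proj1 (meets_flip n r p phi)). apply Wit_meets with s; auto. }
    apply (Wit_not n r p phi s Wp). apply BACK. right. unfold p in *. lra. }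
  split; auto. intros p. split; auto.
  intros [HM HC].
  assert (u1 : p <= r * cos b) by (eapply meets_upper; eauto).
  assert (u2 : - p <= r * cos b').
  { apply (meets_upper n r k' b' (phi + PI)); auto. apply (proj1 (meets_flip n r p phi)); auto. }
  apply NNPP. intro hno. apply (Wit_not n r p phi s); auto.
  assert (q1 : p < r * cos b - Kc n s b) by (apply Rnot_le_lt; intro; apply hno; left; lra).
  assert (q2 : - p < r * cos b' - Kc n s b') by (apply Rnot_le_lt; intro; apply hno; right; lra).
  destruct (Rle_or_lt m1 p) as [c1|c1]. apply W1; lra.
  destruct (Rle_or_lt m1' (- p)) as [c2|c2]. apply W2; lra.
  apply (Wit_conv n r phi s (- m1') m1 p).
  - apply W2. lra.
  - apply W1. lra.
  - lra.
Qed.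

Lemma inner_val n r s k b k' b' phi : (3 <= n)%nat -> 0 < r -> 0 <= s ->
  - om n < b < om n -> phi = 2 * IZR k * om n + b ->
  - om n < b' < om n -> phi + PI = 2 * IZR k' * om n + b' ->
  good n r s b -> good n r s b' ->
  is_RInt (fun p => Defs.ind (meets n r p phi /\ chord_le n r p phi s)) 0 r
    (Rmin (Kc n s b) (r * cos b) + Rmax 0 (Kc n s b' - r * cos b')).
Proof.
  intros hn hr hs hb hphi hb' hphi' G G'.
  destruct (charac n r s k b k' b' phi hn hr hs hb hphi hb' hphi' G G') as [CH DIS].
  destruct (om_facts n hn) as [h0 [h1 h2]]. pose proof PI_RGT_0.
  assert (cb : 0 < cos b <= 1) by (split; [apply cos_gt_0; lra | apply COS_bound]).
  assert (cb' : 0 < cos b' <= 1) by (split; [apply cos_gt_0; lra | apply COS_bound]).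
  pose proof (Kc_nonneg n s b hn hb hs). pose proof (Kc_nonneg n s b' hn hb' hs).
  assert (PE : forall x : R, Defs.ind (r * cos b - Kc n s b <= x <= r * cos b) +
                                  Defs.ind (- (r * cos b') <= x <= - (r * cos b') + Kc n s b') =
                 Defs.ind (meets n r x phi /\ chord_le n r x phi s)).
  { intros x. unfold Defs.ind at 3.
    destruct (excluded_middle_informative (meets n r x phi /\ chord_le n r x phi s)) as [h|h].
    + apply CH in h. destruct h as [h|h].
      * rewrite (ind_true (_ <= x <= r * cos b)) by lra. rewrite ind_false by (intro; lra). ring.
      * rewrite (ind_false (_ <= x <= r * cos b)) by (intro; lra). rewrite ind_true by lra. ring.
    + rewrite (ind_false (_ <= x <= r * cos b)). rewrite ind_false. ring.
      intro; apply h; apply CH; right; auto. intro; apply h; apply CH; left; auto. }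
  apply is_RInt_ext with (fun p => Defs.ind (r * cos b - Kc n s b <= p <= r * cos b) +
                                  Defs.ind (- (r * cos b') <= p <= - (r * cos b') + Kc n s b')).
  - intros x _. apply PE.
  - replace (Rmin (Kc n s b) (r * cos b) + Rmax 0 (Kc n s b' - r * cos b')) with
      ((clamp 0 r (r * cos b) - clamp 0 r (r * cos b - Kc n s b)) +
       (clamp 0 r (- (r * cos b') + Kc n s b') - clamp 0 r (- (r * cos b')))).
    + apply Rplus_int; apply is_RInt_ind_interval; lra.
    + assert (r * cos b <= r) by nra. assert (0 < r * cos b') by nra. assert (0 < r * cos b) by nra.
      unfold clamp. mm.
Qed.

Lemma rep n x : (3 <= n)%nat -> exists k b, x = 2 * IZR k * om n + b /\ - om n <= b < om n.
Proof.
  intros hn. destruct (om_facts n hn) as [h0 _].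
  set (y := x / (2 * om n) - 1 / 2). destruct (archimed y) as [a1 a2].
  set (z := IZR (up y)) in *.
  assert (hz1 : z <= x / (2 * om n) + 1/2) by (unfold y in *; lra).
  assert (hz2 : x / (2 * om n) - 1/2 < z) by (unfold y in *; lra).
  exists (up y), (x - 2 * z * om n). split. unfold z; ring.
  assert (e : x = (x / (2 * om n)) * (2 * om n)) by (field; lra).
  split.
  - apply Rmult_le_compat_r with (r := 2 * om n) in hz1; [|lra].
    rewrite Rmult_plus_distr_r, <- e in hz1. lra.
  - apply Rmult_lt_compat_r with (r := 2 * om n) in hz2; [|lra].
    rewrite Rmult_minus_distr_r, <- e in hz2. lra.
Qed.

Definition generic n phi := forall j : Z, phi <> IZR j * (om n / 2).

Lemma rep_generic n phi : (3 <= n)%nat -> generic n phi ->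
  exists k b, phi = 2 * IZR k * om n + b /\ - om n < b < om n /\ b <> om n / 2 /\ b <> - (om n / 2).
Proof.
  intros hn hg. destruct (rep n phi hn) as [k [b [e hb]]]. exists k, b.
  split; [exact e|]. split; [split; [|lra]|split].
  - destruct hb as [hb _]. destruct hb as [hb|hb]; auto. exfalso.
    apply (hg (4 * k - 2)%Z). rewrite e, minus_IZR, mult_IZR, <- hb. simpl. field.
  - intro hb'. apply (hg (4 * k + 1)%Z). rewrite e, plus_IZR, mult_IZR, hb'. simpl. field.
  - intro hb'. apply (hg (4 * k - 1)%Z). rewrite e, minus_IZR, mult_IZR, hb'. simpl. field.
Qed.

Lemma generic_shift n phi : (3 <= n)%nat -> generic n phi -> generic n (phi + PI).
Proof.
  intros hn hg j e. apply (hg (j - 2 * Z.of_nat n)%Z).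
  destruct (om_facts n hn) as [h0 [h1 h2]].
  rewrite minus_IZR, mult_IZR, <- INR_IZR_INZ. rewrite <- h2 in e. simpl.
  replace phi with (phi + INR n * om n - INR n * om n) by ring. rewrite e. field.
Qed.

Lemma sin_lt_1 g : 0 < g < PI -> g <> PI / 2 -> sin g < 1.
Proof.
  intros hg hne. rewrite <- cos_shift. rewrite <- cos_0.
  destruct (Rlt_or_le 0 (PI / 2 - g)) as [h|h].
  - apply cos_decreasing_1; lra.
  - rewrite <- (cos_neg (PI/2 - g)). apply cos_decreasing_1; try lra.
Qed.

Lemma cond_gamma n r s g : (3 <= n)%nat -> 0 < r -> 0 <= s ->
  (if Nat.eqb n 3 then s <= 2 * r * (cos (PI / (2 * INR n))) ^ 2
   else s <= 2 * r * sin (PI / INR n)) ->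
  0 < g < 2 * om n -> g <> 3 * (om n / 2) ->
  s * sin g < 2 * r * sin (om n) * sin (2 * om n).
Proof.
  intros hn hr hs hS hg hne. pose proof PI_RGT_0.
  destruct (om_facts n hn) as [h0 [h1 h2]]. destruct (sin_pos_2w n hn) as [s0 [sw cw]].
  assert (sg : 0 < sin g) by (apply sin_gt_0; lra).
  destruct (Nat.eqb_spec n 3) as [e|e].
  - subst n. assert (o : om 3 = PI / 3) by (unfold om; simpl; f_equal; ring).
    replace (PI / (2 * INR 3)) with (PI / 6) in hS by (simpl; field).
    rewrite cos_PI6 in hS. rewrite o in *. rewrite sin_PI3, sin_2PI3.
    pose proof (sqrt_sqrt 3) as e3. assert (e3' : sqrt 3 * sqrt 3 = 3) by (apply e3; lra).
    assert (hS' : s <= 3 / 2 * r) by (replace (2 * r * (sqrt 3 / 2) ^ 2) with (r * (sqrt 3 * sqrt 3) / 2) in hS by field; rewrite e3' in hS; lra).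
    replace (2 * r * (sqrt 3 / 2) * (sqrt 3 / 2)) with (r * (sqrt 3 * sqrt 3) / 2) by field. rewrite e3'.
    assert (sin g < 1) by (apply sin_lt_1; lra).
    destruct hs as [hs|hs]. nra. subst s. lra.
  - assert (h4 : 4 <= INR n).
    { replace 4 with (INR 4) by (simpl; ring). apply le_INR. lia. }
    assert (w4 : om n <= PI / 4).
    { unfold om. unfold Rdiv. apply Rmult_le_compat_l; [lra|]. apply Rinv_le_contravar; lra. }
    assert (sin g < sin (2 * om n)) by (apply sin_increasing_1; lra).
    assert (0 < 2 * r * sin (om n) * sin (2 * om n)) by (repeat apply Rmult_lt_0_compat; lra).
    unfold om in *. destruct hs as [hs|hs]; [|subst s; lra].
    apply Rlt_le_trans with (s * sin (2 * (PI / INR n))). nra.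
    apply Rmult_le_compat_r; lra.
Qed.

Lemma good_ok n r s b : (3 <= n)%nat -> 0 < r -> 0 <= s ->
  (if Nat.eqb n 3 then s <= 2 * r * (cos (PI / (2 * INR n))) ^ 2
   else s <= 2 * r * sin (PI / INR n)) ->
  - om n < b < om n -> b <> om n / 2 -> b <> - (om n / 2) -> good n r s b.
Proof.
  intros hn hr hs hS hb hb1 hb2.
  destruct (g_pos n b hn hb) as [s1 s2]. destruct (sin_pos_2w n hn) as [s0 [sw cw]].
  pose proof (id3 (om n) b) as i3. pose proof (id4 (om n) b) as i4.
  assert (c1 := cond_gamma n r s (om n + b) hn hr hs hS ltac:(lra) ltac:(lra)).
  assert (c2 := cond_gamma n r s (om n - b) hn hr hs hS ltac:(lra) ltac:(lra)).
  unfold good, Kc. split.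
  - assert (s * sin (om n - b) * sin (om n + b) / sin (2 * om n) < 2 * r * sin (om n) * sin (om n - b)).
    { apply Rmult_lt_reg_r with (sin (2 * om n)); auto. unfold Rdiv.
      rewrite Rmult_assoc, Rinv_l by lra. nra. }
    nra.
  - assert (s * sin (om n - b) * sin (om n + b) / sin (2 * om n) < 2 * r * sin (om n) * sin (om n + b)).
    { apply Rmult_lt_reg_r with (sin (2 * om n)); auto. unfold Rdiv.
      rewrite Rmult_assoc, Rinv_l by lra. nra. }
    nra.
Qed.

Lemma cplus (f g : R -> R) x : continuous f x -> continuous g x -> continuous (fun y => f y + g y) x.
Proof. intros H1 H2. exact (continuous_plus f g x H1 H2). Qed.
Lemma cminus (f g : R -> R) x : continuous f x -> continuous g x -> continuous (fun y => f y - g y) x.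
Proof. intros H1 H2. exact (continuous_minus f g x H1 H2). Qed.
Lemma cmult (f g : R -> R) x : continuous f x -> continuous g x -> continuous (fun y => f y * g y) x.
Proof. intros H1 H2. exact (continuous_mult f g x H1 H2). Qed.
Lemma cconst (c x : R) : continuous (fun _ : R => c) x.
Proof. exact (continuous_const c x). Qed.
Lemma cid (x : R) : continuous (fun y : R => y) x.
Proof. exact (continuous_id x). Qed.
Lemma ccos (f : R -> R) x : continuous f x -> continuous (fun y => cos (f y)) x.
Proof. intros H. exact (continuous_cos_comp f x H). Qed.
Lemma cabs (f : R -> R) x : continuous f x -> continuous (fun y => Rabs (f y)) x.
Proof. intros H. exact (continuous_Rabs_comp f x H). Qed.

Lemma Rmax_abs a b : Rmax a b = (a + b + Rabs (a - b)) / 2.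
Proof. unfold Rmax. destruct Rle_dec; [rewrite Rabs_left1 by lra | rewrite Rabs_right by lra]; field. Qed.
Lemma Rmin_abs a b : Rmin a b = (a + b - Rabs (a - b)) / 2.
Proof. unfold Rmin. destruct Rle_dec; [rewrite Rabs_left1 by lra | rewrite Rabs_right by lra]; field. Qed.

Lemma cext (f g : R -> R) x : (forall y, f y = g y) -> continuous f x -> continuous g x.
Proof. intros e H. replace g with f; auto. apply functional_extensionality; auto. Qed.

Lemma cmax (f g : R -> R) x : continuous f x -> continuous g x -> continuous (fun y => Rmax (f y) (g y)) x.
Proof.
  intros H1 H2. apply cext with (fun y => (f y + g y + Rabs (f y - g y)) * (1/2)).
  intros; rewrite Rmax_abs; field.
  apply cmult; [|apply cconst]. apply cplus. apply cplus; auto. apply cabs, cminus; auto.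
Qed.
Lemma cmin (f g : R -> R) x : continuous f x -> continuous g x -> continuous (fun y => Rmin (f y) (g y)) x.
Proof.
  intros H1 H2. apply cext with (fun y => (f y + g y - Rabs (f y - g y)) * (1/2)).
  intros; rewrite Rmin_abs; field.
  apply cmult; [|apply cconst]. apply cminus. apply cplus; auto. apply cabs, cminus; auto.
Qed.

Fixpoint maxl (f : nat -> R) (m : nat) : R :=
  match m with O => f O | S m' => Rmax (maxl f m') (f (S m')) end.

Lemma maxl_ge f m j : (j <= m)%nat -> f j <= maxl f m.
Proof.
  induction m; intros h; simpl.
  - replace j with O by lia. lra.
  - destruct (Nat.eq_dec j (S m)) as [e|e]. subst. apply Rmax_r.
    eapply Rle_trans; [apply IHm; lia | apply Rmax_l].
Qed.
Lemma maxl_le f m c : (forall j, (j <= m)%nat -> f j <= c) -> maxl f m <= c.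
Proof.
  induction m; intros h; simpl. apply h; lia.
  apply Rmax_lub. apply IHm; intros; apply h; lia. apply h; lia.
Qed.

Definition Mx n phi := maxl (fun j => cos (phi - 2 * INR j * om n)) (n - 1).

Lemma Mx_eq n k b phi : (3 <= n)%nat -> - om n <= b <= om n -> phi = 2 * IZR k * om n + b ->
  Mx n phi = cos b.
Proof.
  intros hn hb e. apply Rle_antisym.
  - apply maxl_le. intros j hj.
    replace (phi - 2 * INR j * om n) with (b + 2 * IZR (k - Z.of_nat j) * om n)
      by (rewrite e, minus_IZR, <- INR_IZR_INZ; ring).
    apply cos_even_le; auto.
  - destruct (Zred n k) as [q [j [ek hj]]]; [lia|].
    eapply Rle_trans; [| apply (maxl_ge _ _ (Z.to_nat j)); lia].
    cbv beta. right.
    replace (phi - 2 * INR (Z.to_nat j) * om n) with (b + 2 * (IZR q * INR n) * om n).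
    + symmetry. apply cos_even_eq; auto.
    + rewrite e, ek, (INR_IZR_INZ (Z.to_nat j)), Z2Nat.id by lia. rewrite plus_IZR, mult_IZR, <- INR_IZR_INZ. ring.
Qed.

Lemma Mx_cont n x : continuous (Mx n) x.
Proof.
  unfold Mx. generalize (n - 1)%nat. intros m. induction m; simpl.
  - apply ccos. apply cminus; [apply cid | apply cconst].
  - apply cmax; auto. apply ccos. apply cminus; [apply cid | apply cconst].
Qed.

Definition Kf n s phi := s * (Mx n phi ^ 2 - cos (om n) ^ 2) / sin (2 * om n).
Definition Gg n r s phi := Rmin (Kf n s phi) (r * Mx n phi) +
  Rmax 0 (Kf n s (phi + PI) - r * Mx n (phi + PI)).

Lemma Kf_cont n s x : continuous (Kf n s) x.
Proof.
  unfold Kf. apply cext with (fun y => s * (Mx n y * Mx n y - cos (om n) ^ 2) * (/ sin (2 * om n))).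
  intros; unfold Rdiv; ring.
  apply cmult; [|apply cconst]. apply cmult; [apply cconst|]. apply cminus; [|apply cconst].
  apply cmult; apply Mx_cont.
Qed.

Lemma shift_cont (f : R -> R) c x : (forall y, continuous f y) -> continuous (fun y => f (y + c)) x.
Proof.
  intros H. apply (continuous_comp (fun y => y + c) f). apply cplus; [apply cid | apply cconst]. apply H.
Qed.

Lemma Gg_cont n r s x : continuous (Gg n r s) x.
Proof.
  unfold Gg. apply cplus. apply cmin. apply Kf_cont. apply cmult. apply cconst. apply Mx_cont.
  apply cmax. apply cconst. apply cminus. apply (shift_cont (Kf n s)). apply Kf_cont.
  apply cmult. apply cconst. apply (shift_cont (Mx n)). apply Mx_cont.
Qed.

Lemma Kc_eq n s b : Kc n s b = s * (cos b ^ 2 - cos (om n) ^ 2) / sin (2 * om n).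
Proof.
  unfold Kc. f_equal. rewrite sin_minus, sin_plus.
  pose proof (sin2_cos2 b). pose proof (sin2_cos2 (om n)). unfold Rsqr in *.
  transitivity (s * ((sin (om n) * sin (om n)) * (cos b * cos b) - (cos (om n) * cos (om n)) * (sin b * sin b))).
  ring. replace (sin b * sin b) with (1 - cos b * cos b) by lra.
  replace (sin (om n) * sin (om n)) with (1 - cos (om n) * cos (om n)) by lra. ring.
Qed.

Lemma RIntC (f : R -> R) a b : ex_RInt f a b -> is_RInt f a b (RInt f a b).
Proof. intros H. exact (RInt_correct f a b H). Qed.
Lemma RIntU (f : R -> R) a b l : is_RInt f a b l -> RInt f a b = l.
Proof. intros H. exact (is_RInt_unique f a b l H). Qed.

Lemma shift_int (f : R -> R) a b c l : is_RInt f (a + c) (b + c) l -> is_RInt (fun y => f (y + c)) a b l.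
Proof.
  intros H. apply is_RInt_ext with (fun y => scal 1 (f (1 * y + c))).
  - intros x _. unfold scal; simpl. unfold mult; simpl. rewrite Rmult_1_l, Rmult_1_l. reflexivity.
  - apply (is_RInt_comp_lin f 1 c a b l). rewrite !Rmult_1_l. exact H.
Qed.

Lemma ex_cont (f : R -> R) a b : (forall x, continuous f x) -> ex_RInt f a b.
Proof. intros H. exact (ex_RInt_continuous f a b (fun z _ => H z)). Qed.

Lemma half_shift (f : R -> R) : (forall x, continuous f x) ->
  is_RInt f 0 (2 * PI) (RInt (fun x => f x + f (x + PI)) 0 PI).
Proof.
  intros H.
  assert (A : is_RInt f 0 PI (RInt f 0 PI)) by (apply RIntC, ex_cont; auto).
  assert (B : is_RInt f PI (2 * PI) (RInt f PI (2 * PI))) by (apply RIntC, ex_cont; auto).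
  assert (B' : is_RInt (fun x => f (x + PI)) 0 PI (RInt f PI (2 * PI))).
  { apply shift_int. replace (0 + PI) with PI by ring. replace (PI + PI) with (2 * PI) by ring. auto. }
  replace (RInt (fun x => f x + f (x + PI)) 0 PI) with (RInt f 0 PI + RInt f PI (2 * PI)).
  - apply RChasles with PI; auto.
  - symmetry. apply RIntU. apply Rplus_int; auto.
Qed.

Lemma per_sum (f : R -> R) T : (forall x, continuous f x) -> (forall x, f (x + T) = f x) ->
  forall m : nat, is_RInt f 0 (INR m * T) (INR m * RInt f 0 T).
Proof.
  intros H HP.
  assert (HPm : forall m x, f (x + INR m * T) = f x).
  { induction m; intros x. simpl. rewrite Rmult_0_l, Rplus_0_r. auto.
    rewrite S_INR. replace (x + (INR m + 1) * T) with ((x + INR m * T) + T) by ring. rewrite HP; auto. }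
  induction m.
  - simpl. rewrite !Rmult_0_l. exact (is_RInt_point f 0).
  - rewrite S_INR. replace ((INR m + 1) * RInt f 0 T) with (INR m * RInt f 0 T + RInt f 0 T) by ring.
    apply RChasles with (INR m * T); auto.
    apply is_RInt_ext with (fun y => f (y - INR m * T)).
    + intros x _. replace x with ((x - INR m * T) + INR m * T) at 2 by ring. rewrite HPm. auto.
    + apply shift_int. replace (INR m * T + - (INR m * T)) with 0 by ring.
      replace ((INR m + 1) * T + - (INR m * T)) with T by ring.
      apply RIntC, ex_cont; auto.
Qed.

Lemma Mx_per n x : (3 <= n)%nat -> Mx n (x + 2 * om n) = Mx n x.
Proof.
  intros hn. destruct (rep n x hn) as [k [b [e hb]]].
  rewrite (Mx_eq n k b x); auto; [|lra].
  apply (Mx_eq n (k + 1) b); auto. lra. rewrite e, plus_IZR. ring.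
Qed.

Lemma Mx_per2 n x : (3 <= n)%nat -> Mx n (x + 2 * PI) = Mx n x.
Proof.
  intros hn. destruct (rep n x hn) as [k [b [e hb]]].
  destruct (om_facts n hn) as [h0 [h1 h2]].
  rewrite (Mx_eq n k b x); auto; [|lra].
  apply (Mx_eq n (k + Z.of_nat n) b); auto. lra. rewrite e, plus_IZR, <- INR_IZR_INZ, <- h2. ring.
Qed.

Definition K0 n s b := s * (cos b ^ 2 - cos (om n) ^ 2) / sin (2 * om n).

Lemma Kf_K0 n s k b x : (3 <= n)%nat -> - om n <= b <= om n -> x = 2 * IZR k * om n + b -> Kf n s x = K0 n s b.
Proof. intros hn hb e. unfold Kf, K0. rewrite (Mx_eq n k b x); auto. Qed.

Definition Jv n s := s * (om n + sin (om n) * cos (om n) - 2 * om n * cos (om n) ^ 2) / sin (2 * om n).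

Lemma J_int n s : (3 <= n)%nat -> is_RInt (K0 n s) (- om n) (om n) (Jv n s).
Proof.
  intros hn. destruct (sin_pos_2w n hn) as [s0 _].
  set (F := fun b => s * ((b + sin b * cos b) / 2 - b * cos (om n) ^ 2) / sin (2 * om n)).
  replace (Jv n s) with (minus (F (om n)) (F (- om n))).
  - apply (is_RInt_derive F (K0 n s)).
    + intros x _. unfold F, K0. auto_derive. auto.
      pose proof (sin2_cos2 x). unfold Rsqr in H.
      replace (sin x * (1 * - sin x)) with (- (sin x * sin x)) by ring.
      replace (sin x * sin x) with (1 - cos x * cos x) by lra. field. lra.
    + intros x _. unfold K0.
      apply cext with (fun y => s * (cos y * cos y - cos (om n) ^ 2) * (/ sin (2 * om n))).
      intros; unfold Rdiv; ring.
      apply cmult; [|apply cconst]. apply cmult; [apply cconst|]. apply cminus; [|apply cconst].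
      apply cmult; apply ccos, cid.
  - unfold minus, plus, opp; simpl. unfold F, Jv. rewrite sin_neg, cos_neg. field. lra.
Qed.

Lemma K0_cont n s x : continuous (K0 n s) x.
Proof.
  unfold K0.
  apply cext with (fun y => s * (cos y * cos y - cos (om n) ^ 2) * (/ sin (2 * om n))).
  intros; unfold Rdiv; ring.
  apply cmult; [|apply cconst]. apply cmult; [apply cconst|]. apply cminus; [|apply cconst].
  apply cmult; apply ccos, cid.
Qed.

Lemma Kf_2w n s : (3 <= n)%nat -> is_RInt (Kf n s) 0 (2 * om n) (Jv n s).
Proof.
  intros hn. destruct (om_facts n hn) as [h0 [h1 h2]].
  assert (E1 : ex_RInt (K0 n s) 0 (om n)) by (apply ex_cont; intros; apply K0_cont).
  assert (E2 : ex_RInt (K0 n s) (- om n) 0) by (apply ex_cont; intros; apply K0_cont).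
  replace (Jv n s) with (RInt (K0 n s) 0 (om n) + RInt (K0 n s) (- om n) 0).
  - apply RChasles with (om n).
    + apply is_RInt_ext with (K0 n s). intros x hx.
      rewrite Rmin_left in hx by lra. rewrite Rmax_right in hx by lra.
      symmetry. apply (Kf_K0 n s 0 x x); auto. lra. simpl; ring.
      apply RIntC; auto.
    + apply is_RInt_ext with (fun y => K0 n s (y + - (2 * om n))). intros x hx.
      rewrite Rmin_left in hx by lra. rewrite Rmax_right in hx by lra.
      symmetry. apply (Kf_K0 n s 1 (x + - (2 * om n)) x); auto. lra. simpl; ring.
      apply shift_int. replace (om n + - (2 * om n)) with (- om n) by ring.
      replace (2 * om n + - (2 * om n)) with 0 by ring. apply RIntC; auto.
  - pose proof (J_int n s hn) as J.
    assert (J2 : is_RInt (K0 n s) (- om n) (om n) (RInt (K0 n s) (- om n) 0 + RInt (K0 n s) 0 (om n)))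
      by (apply RChasles with 0; apply RIntC; auto).
    apply RIntU in J. apply RIntU in J2. rewrite <- J, J2. ring.
Qed.

Lemma Kf_total n s : (3 <= n)%nat -> is_RInt (Kf n s) 0 (2 * PI) (INR n * Jv n s).
Proof.
  intros hn. destruct (om_facts n hn) as [h0 [h1 h2]].
  replace (2 * PI) with (INR n * (2 * om n)) by (rewrite <- h2; ring).
  rewrite <- (RIntU _ _ _ _ (Kf_2w n s hn)).
  apply per_sum. intros; apply Kf_cont.
  intros x. unfold Kf. rewrite Mx_per; auto.
Qed.

Lemma Gg_total n r s : (3 <= n)%nat -> is_RInt (Gg n r s) 0 (2 * PI) (INR n * Jv n s).
Proof.
  intros hn.
  pose proof (half_shift (Gg n r s) (Gg_cont n r s)) as A.
  pose proof (half_shift (Kf n s) (Kf_cont n s)) as B.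
  pose proof (Kf_total n s hn) as C.
  apply RIntU in B. apply RIntU in C. rewrite B in C. rewrite <- C.
  replace (RInt (fun x => Kf n s x + Kf n s (x + PI)) 0 PI) with
          (RInt (fun x => Gg n r s x + Gg n r s (x + PI)) 0 PI); auto.
  apply RInt_ext. intros x _. unfold Gg.
  replace (x + PI + PI) with (x + 2 * PI) by ring.
  assert (Kf n s (x + 2 * PI) = Kf n s x) by (unfold Kf; rewrite Mx_per2; auto).
  rewrite H, Mx_per2 by auto. mm.
Qed.

Definition inner n r s phi := fun p => Defs.ind (meets n r p phi /\ chord_le n r p phi s).

Lemma inner_ex n r s phi : 0 < r -> ex_RInt (inner n r s phi) 0 r.
Proof.
  intros hr.
  destruct (ex_RInt_ind_convex (fun p => meets n r p phi) 0 r ltac:(lra) (meets_conv n r phi)) as [v1 H1].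
  destruct (ex_RInt_ind_convex (fun p => Wit n r p phi s) 0 r ltac:(lra) (Wit_conv n r phi s)) as [v2 H2].
  assert (PE : forall x, Defs.ind (meets n r x phi) - Defs.ind (Wit n r x phi s) = inner n r s phi x).
  { intros x. unfold inner.
    destruct (classic (Wit n r x phi s)) as [hw|hw].
    + rewrite (ind_true (Wit _ _ _ _ _)) by auto. rewrite ind_true by (apply Wit_meets with s; auto).
      rewrite ind_false. ring. intros [_ hc]. apply (Wit_not n r x phi s hw hc).
    + rewrite (ind_false (Wit _ _ _ _ _)) by auto.
      assert (hc : chord_le n r x phi s) by (apply NNPP; intro hc; apply hw, not_Wit; auto).
      destruct (classic (meets n r x phi)) as [hm|hm].
      * rewrite ind_true by auto. rewrite ind_true by auto. ring.
      * rewrite ind_false by auto. rewrite ind_false by tauto. ring. }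
  exists (v1 - v2). apply is_RInt_ext with (fun p => Defs.ind (meets n r p phi) - Defs.ind (Wit n r p phi s)).
  - intros x _. apply PE.
  - apply Rminus_int; auto.
Qed.

Lemma I_eq_G n r s phi : (3 <= n)%nat -> 0 < r -> 0 <= s ->
  (if Nat.eqb n 3 then s <= 2 * r * (cos (PI / (2 * INR n))) ^ 2
   else s <= 2 * r * sin (PI / INR n)) ->
  generic n phi -> RInt (inner n r s phi) 0 r = Gg n r s phi.
Proof.
  intros hn hr hs hS hg.
  destruct (rep_generic n phi hn hg) as [k [b [e [hb [hb1 hb2]]]]].
  destruct (rep_generic n (phi + PI) hn (generic_shift n phi hn hg)) as [k' [b' [e' [hb' [hb1' hb2']]]]].
  apply RIntU.
  replace (Gg n r s phi) with (Rmin (Kc n s b) (r * cos b) + Rmax 0 (Kc n s b' - r * cos b')).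
  - apply (inner_val n r s k b k' b' phi); auto; apply good_ok; auto.
  - unfold Gg, Kf. rewrite (Mx_eq n k b phi), (Mx_eq n k' b' (phi + PI)) by (auto; lra).
    rewrite !Kc_eq. reflexivity.
Qed.

Lemma I_total n r s : (3 <= n)%nat -> 0 < r -> 0 <= s ->
  (if Nat.eqb n 3 then s <= 2 * r * (cos (PI / (2 * INR n))) ^ 2
   else s <= 2 * r * sin (PI / INR n)) ->
  is_RInt (fun phi => RInt (inner n r s phi) 0 r) 0 (2 * PI) (INR n * Jv n s).
Proof.
  intros hn hr hs hS. destruct (om_facts n hn) as [h0 [h1 h2]]. pose proof PI_RGT_0.
  apply is_RInt_ext_fin with (map (fun j => INR j * (om n / 2)) (seq 0 (4 * n + 1))) (Gg n r s).
  - lra.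
  - intros x hx hnot. apply I_eq_G; auto. intros j ej. apply hnot.
    apply in_map_iff. exists (Z.to_nat j).
    assert (hj0 : (0 <= j)%Z).
    { apply le_IZR. apply Rmult_le_reg_r with (om n / 2). lra. rewrite <- ej. lra. }
    assert (hj1 : (j <= 4 * Z.of_nat n)%Z).
    { apply le_IZR. apply Rmult_le_reg_r with (om n / 2). lra. rewrite <- ej.
      rewrite mult_IZR, <- INR_IZR_INZ. replace (4 * INR n * (om n / 2)) with (2 * (INR n * om n)) by field.
      lra. }
    split.
    + rewrite INR_IZR_INZ, Z2Nat.id by lia. auto.
    + apply in_seq. lia.
  - apply Gg_total; auto.
Qed.

Lemma toDefs' (f : R -> R) a b v : is_RInt f a b v -> Defs.is_RInt f a b v.
Proof.
  intros H. assert (E : ex_RInt f a b) by (exists v; exact H).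
  rewrite <- (RIntU _ _ _ _ H). apply toDefs; auto.
Qed.

Theorem mainTheorem2 (n : nat) (r s : R) :
  (3 <= n)%nat -> 0 < r -> 0 <= s ->
  (if Nat.eqb n 3 then s <= 2 * r * (cos (PI / (2 * INR n))) ^ 2
   else s <= 2 * r * sin (PI / INR n)) ->
  chord_cdf_is n r s
    (((1 - PI / INR n * cot (PI / INR n)) * csc (PI / INR n)
      + PI / INR n * sec (PI / INR n)) * (s / (4 * r))).
Proof.
  intros hn hr hs hS.
  exists (INR n * Jv n s). split.
  - exists (fun phi => RInt (inner n r s phi) 0 r). split.
    + intros phi. apply toDefs. apply inner_ex; auto.
    + apply toDefs'. apply I_total; auto.
  - destruct (sin_pos_2w n hn) as [s0 [sw cw]].
    destruct (om_facts n hn) as [h0 [h1 h2]].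
    assert (hnz : 0 < INR n) by (apply lt_0_INR; lia).
    pose proof (sin2_cos2 (om n)) as sc. unfold Rsqr in sc.
    unfold Jv, perimeter, cot, csc, sec. fold (om n). rewrite sin_2a.
    field_simplify; try lra. f_equal.
    replace (sin (om n) ^ 2) with (1 - cos (om n) ^ 2) by (rewrite <- sc; ring). ring.
Qed.
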